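(* Let f1 and f2 be two point agents in the plane, each moving with a constant nonzero velocity, such that their straight-line trajectories are not parallel and hence intersect in a single point $P$. Let $t_1$ and $t_2$ be the times at which f1 and f2 respectively pass through $P$, and suppose $t_1>t_2$ (f1 reaches the intersection after f2). Then f1 perceives generalized regressive motion (GRM) from f2 at all times $t<t_2$.
   Context: Each agent is a point (center of projection) with a heading equal to the direction of its velocity. For observer f1 and observed f2, let $\phi_{21}(t)\in[-\pi,\pi)$ be the azimuthal position of f2 as seen from f1, measured relative to f1's heading: $\phi=0$ is straight ahead, positive angles are to the observer's left (counterclockwise) and negative to its right; $\dot\phi_{21}$ is its time derivative. Fix the Contralateral Visual Angle $\mathrm{CVA}\in[0,\pi]$ (the angular distance of the nasal boundary of each eye's visual field from the straight-ahead direction). f1 perceives GRM from f2 at time $t$ if and only if either $\dot\phi_{21}(t)>0$ and $\phi_{21}(t)\in[-\pi,\mathrm{CVA}]$, or $\dot\phi_{21}(t)<0$ and $\phi_{21}(t)\in[-\mathrm{CVA},\pi]$. *)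

(* Defs.v *)
From Stdlib Require Import Reals Lra.
Open Scope R_scope.

Definition pt := (R * R)%type.

Definition padd (p q : pt) : pt := (fst p + fst q, snd p + snd q).
Definition psub (p q : pt) : pt := (fst p - fst q, snd p - snd q).
Definition pscale (k : R) (p : pt) : pt := (k * fst p, k * snd p).
Definition dot (p q : pt) : R := fst p * fst q + snd p * snd q.
(* cross u w > 0  iff  w points to the left (counterclockwise) of u *)
Definition cross (p q : pt) : R := fst p * snd q - snd p * fst q.

Definition traj (a v : pt) (t : R) : pt := padd a (pscale t v).

(* Polar angle in [-PI, PI) of the planar vector (x, y) (x-axis = 0,
   counterclockwise positive).  Off the closed negative x-axis it is
   2 atan (y / (|(x,y)| + x)); on the open negative x-axis it is -PI
   (the [-PI,PI) convention); for the zero vector it is (arbitrarily) 0. *)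
Definition angle (x y : R) : R :=
  if Req_EM_T y 0 then
    (if Rlt_dec x 0 then - PI else 0)
  else 2 * atan (y / (sqrt (x * x + y * y) + x)).

(* Azimuth phi_21 of the point q (observed) as seen from an observer at p
   with heading vector h (nonzero): angle of q - p measured from h,
   positive to the observer's left (counterclockwise). *)
Definition azimuth (p h q : pt) : R :=
  let r := psub q p in angle (dot h r) (cross h r).

Definition phi21 (a1 v1 a2 v2 : pt) (t : R) : R :=
  azimuth (traj a1 v1 t) v1 (traj a2 v2 t).

Definition perceives_GRM (CVA : R) (phi : R -> R) (t : R) : Prop :=
  exists dphi : R, derivable_pt_lim phi t dphi /\
    ((dphi > 0 /\ - PI <= phi t <= CVA) \/
     (dphi < 0 /\ - CVA <= phi t <= PI)).

(* Main.v *)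
Require Import Defs.
From Stdlib Require Import Reals Lra.
From Coquelicot Require Import Coquelicot.
Open Scope R_scope.

Lemma angle_deriv (A B C D t : R) : C + D*t <> 0 ->
  derivable_pt_lim (fun u => angle (A+B*u) (C+D*u)) t
   (((A+B*t)*D - (C+D*t)*B)/((A+B*t)*(A+B*t)+(C+D*t)*(C+D*t))).
Proof.
  intros HY.
  set (X := A+B*t). set (Y := C + D*t).
  assert (Hs : 0 < X*X+Y*Y) by (assert (0 < Y*Y) by (apply Rsqr_pos_lt; auto); nra).
  assert (HsX : X < sqrt (X*X+Y*Y) /\ - X < sqrt(X*X+Y*Y)).
  { assert (Hsq := sqrt_sqrt (X*X+Y*Y) (Rlt_le _ _ Hs)).
    assert (H0 := sqrt_pos (X*X+Y*Y)).
    assert (0 < Y*Y) by (apply Rsqr_pos_lt; auto). nra. }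
  apply is_derive_Reals.
  apply is_derive_ext_loc with
   (f := fun u => 2 * atan ((C+D*u) / (sqrt ((A+B*u)*(A+B*u)+(C+D*u)*(C+D*u)) + (A+B*u)))).
  - assert (Hc : continuity_pt (fun u => C + D*u) t) by (apply continuity_pt_plus; [apply continuity_pt_const; intros ? ?; auto| apply continuity_pt_scal; apply derivable_continuous_pt; apply derivable_pt_id]).
    apply continuity_pt_locally with (eps := mkposreal (Rabs Y) (Rabs_pos_lt _ HY)) in Hc.
    revert Hc. apply filter_imp. intros u Hu. simpl in Hu.
    unfold angle. destruct (Req_EM_T (C+D*u) 0) as [E|E]; [|reflexivity].
    exfalso. rewrite E in Hu. fold Y in Hu. rewrite Rminus_0_l, Rabs_Ropp in Hu. lra.
  - set (s := sqrt (X*X+Y*Y)).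
    evar (l : R).
    assert (Hd : is_derive (fun u => 2 * atan ((C+D*u) / (sqrt ((A+B*u)*(A+B*u)+(C+D*u)*(C+D*u)) + (A+B*u)))) t l).
    { auto_derive.
      - repeat split; try exact I. fold X Y. lra. fold X Y; lra.
      - fold X Y s. subst l. reflexivity. }
    replace ((X*D - Y*B)/(X*X+Y*Y)) with l; [exact Hd|]. subst l.
    assert (Hsq : s*s = X*X+Y*Y) by (apply sqrt_sqrt; lra).
    fold s in HsX.
    assert (0 < s) by (unfold s; apply sqrt_lt_R0; lra).
    assert (0 < s + X) by lra. rewrite <- Hsq. field_simplify_eq; [assert (HY2 : Y^2 = s^2 - X^2) by nra; replace (Y^3) with (Y*Y^2) by ring; rewrite HY2; ring|]. repeat split; try lra. nra.
Qed.

Lemma angle_val (X Y : R) : Y <> 0 ->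
  (0 < Y -> 0 < angle X Y < PI) /\ (Y < 0 -> - PI < angle X Y < 0).
Proof.
  intros HY. unfold angle. destruct (Req_EM_T Y 0) as [E|E]; [contradiction|].
  assert (Hs : 0 < X*X+Y*Y) by (assert (0 < Y*Y) by (apply Rsqr_pos_lt; auto); nra).
  assert (HsX : X < sqrt (X*X+Y*Y) /\ - X < sqrt(X*X+Y*Y)).
  { assert (Hsq := sqrt_sqrt (X*X+Y*Y) (Rlt_le _ _ Hs)).
    assert (H0 := sqrt_pos (X*X+Y*Y)).
    assert (0 < Y*Y) by (apply Rsqr_pos_lt; auto). nra. }
  set (s := sqrt (X*X+Y*Y)) in *.
  assert (Hd : 0 < s + X) by lra.
  pose proof (atan_bound (Y/(s+X))).
  split; intros HY'.
  - assert (0 < Y/(s+X)) by (apply Rdiv_lt_0_compat; lra).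
    assert (atan 0 < atan (Y/(s+X))) by (apply atan_increasing; lra).
    rewrite atan_0 in *. lra.
  - assert (Y/(s+X) < 0) by (unfold Rdiv; apply Rmult_neg_pos; [lra| apply Rinv_0_lt_compat; lra]).
    assert (atan (Y/(s+X)) < atan 0) by (apply atan_increasing; lra).
    rewrite atan_0 in *. lra.
Qed.

From Stdlib Require Import FunctionalExtensionality.

Theorem theorem5 (CVA : R) (a1 v1 a2 v2 : pt) (P : pt) (t1 t2 : R) :
  0 <= CVA <= PI ->
  v1 <> (0, 0) -> v2 <> (0, 0) ->
  cross v1 v2 <> 0 ->
  traj a1 v1 t1 = P -> traj a2 v2 t2 = P ->
  t1 > t2 ->
  forall t : R, t < t2 -> perceives_GRM CVA (phi21 a1 v1 a2 v2) t.
Proof.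
  intros HC Hv1 Hv2 Hc H1 H2 Ht t Htt.
  destruct a1 as [a1x a1y], v1 as [p q], a2 as [a2x a2y], v2 as [v2x v2y], P as [Px Py].
  unfold traj, padd, pscale in H1, H2; simpl in H1, H2.
  injection H1 as H1x H1y. injection H2 as H2x H2y.
  unfold cross in Hc; simpl in Hc.
  set (c := p * v2y - q * v2x) in *.
  assert (Hn : 0 < p*p + q*q).
  { destruct (Req_dec p 0); destruct (Req_dec q 0); [subst; contradiction|nra|nra|nra]. }
  set (A := p*(a2x-a1x) + q*(a2y-a1y)).
  set (B := p*(v2x-p) + q*(v2y-q)).
  set (C := p*(a2y-a1y) - q*(a2x-a1x)).
  set (D := p*(v2y-q) - q*(v2x-p)).
  assert (Hf : phi21 (a1x,a1y) (p,q) (a2x,a2y) (v2x,v2y) = fun u => angle (A+B*u) (C+D*u)).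
  { apply functional_extensionality. intro u.
    unfold phi21, azimuth, traj, padd, pscale, psub, dot, cross; simpl.
    f_equal; unfold A, B, C, D; ring. }
  rewrite Hf.
  assert (HY : C + D*t = (t - t2) * c).
  { unfold C, D, c. replace a1x with (Px - t1*p) by lra. replace a1y with (Py - t1*q) by lra.
    replace a2x with (Px - t2*v2x) by lra. replace a2y with (Py - t2*v2y) by lra. ring. }
  assert (HN : (A+B*t)*D - (C+D*t)*B = c * (p*p+q*q) * (t1 - t2)).
  { unfold A, B, C, D, c. replace a1x with (Px - t1*p) by lra. replace a1y with (Py - t1*q) by lra.
    replace a2x with (Px - t2*v2x) by lra. replace a2y with (Py - t2*v2y) by lra. ring. }
  assert (HY0 : C + D*t <> 0).
  { rewrite HY. apply Rmult_integral_contrapositive; split; lra. }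
  set (X := A + B*t) in *. set (Y := C + D*t) in *.
  assert (Hs : 0 < X*X+Y*Y) by (assert (0 < Y*Y) by (apply Rsqr_pos_lt; auto); nra).
  exists ((X*D - Y*B)/(X*X+Y*Y)). split.
  - apply angle_deriv; auto.
  - cbv beta. fold X Y. destruct (angle_val X Y HY0) as [Hp Hm].
    rewrite HN. destruct (Rlt_or_le 0 c) as [Hc0|Hc0].
    + left. split.
      * apply Rdiv_lt_0_compat; [|lra]. apply Rmult_lt_0_compat; [nra|lra].
      * assert (HYn : Y < 0).
        { rewrite HY. apply Rmult_neg_pos; lra. }
        specialize (Hm HYn). lra.
    + right. assert (c < 0) by lra. split.
      * unfold Rdiv. apply Rmult_neg_pos; [|apply Rinv_0_lt_compat; lra].
        assert (0 < (p*p+q*q)*(t1-t2)) by nra. nra.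
      * assert (HYp : 0 < Y).
        { rewrite HY. assert (0 < (t2-t)*(-c)) by (apply Rmult_lt_0_compat; lra). lra. }
        specialize (Hp HYp). lra.
Qed.
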